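(* Let $k,\ell\in\mathbb{N}$ with $\ell$ even. Let $L\subseteq[-1,0]\times[0,k]$ and $R\subseteq[\ell,\ell+1]\times[0,k]$ be polyominos, and define $P=L\cup R\cup([0,\ell]\times[0,k])$. Color the cells of the plane in a chessboard fashion, with the two colors named black and white so that $b\ge w$, where $b$ and $w$ are the numbers of black and white cells contained in $P$. If $\ell\ge 2k$, then the number of cells of $P$ left uncovered by a maximum domino packing of $P$ is exactly $b-w$. Moreover, there exists a maximum domino packing of $P$ in which the rectangle $[k+1,\ell-k-1]\times[0,k]$ is completely covered and every domino intersecting this rectangle is horizontal.
   Context: A cell is a unit square $[i,i+1]\times[j,j+1]$ with $i,j\in\mathbb{Z}$. A polyomino is a finite union of cells. A domino is an axis-parallel $1\times2$ or $2\times1$ rectangle with integer corners. A domino packing of $P$ is a set of pairwise interior-disjoint dominos contained in $P$. A maximum packing is one with the largest possible number of dominos. A domino is horizontal if it is $2\times 1$, i.e., of width $2$ and height $1$. *)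

(* Defs.v *)
From HB Require Import structures.
From mathcomp Require Import all_boot all_order all_algebra finmap.
Set Implicit Arguments. Unset Strict Implicit. Unset Printing Implicit Defensive.
Import Order.TTheory GRing.Theory Num.Theory.
Local Open Scope ring_scope.
Local Open Scope fset_scope.

(* A cell (x, y) is the unit square [x,x+1] x [y,y+1]. *)
Definition cell := (int * int)%type.

(* Cells of the closed rectangle [a,b] x [c,d] (integer corners):
   cells (x,y) with a <= x < b, c <= y < d. *)
Definition ilen (a b : int) : nat := if a <= b then `|b - a|%N else 0%N.
Definition box (a b c d : int) : {fset cell} :=
  [fset p | p in [seq ((a + i%:Z)%R, (c + j%:Z)%R) | i <- iota 0%N (ilen a b),
                                                 j <- iota 0%N (ilen c d)]].

(* A domino is given by its lower-left cell and an orientation: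
   true = horizontal (2x1, width 2), false = vertical (1x2). *)
Definition domino := (cell * bool)%type.
Definition horizontal (d : domino) : bool := d.2.
Definition dcells (d : domino) : {fset cell} :=
  [fset d.1; if d.2 then ((d.1.1 + 1)%R, d.1.2) else (d.1.1, (d.1.2 + 1)%R)].

Definition packing (P : {fset cell}) (D : {fset domino}) : Prop :=
  (forall d, d \in D -> dcells d `<=` P) /\
  (forall d d', d \in D -> d' \in D -> d != d' -> dcells d `&` dcells d' = fset0).

Definition max_packing (P : {fset cell}) (D : {fset domino}) : Prop :=
  packing P D /\ forall D', packing P D' -> (#|` D'| <= #|` D|)%N.

Definition covered (D : {fset domino}) (c : cell) : bool :=
  has (fun d => c \in dcells d) D.

Definition uncovered (P : {fset cell}) (D : {fset domino}) : {fset cell} :=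
  [fset c in P | ~~ covered D c].

Definition color (c : cell) : bool := (2 %| (c.1 + c.2)%R)%Z.

Definition ncol (P : {fset cell}) (col : bool) : nat :=
  #|` [fset c in P | color c == col]|.

(* Main.v *)
Require Import Defs.
From HB Require Import structures.
From mathcomp Require Import all_boot all_order all_algebra finmap.
From mathcomp Require Import zify.
Import Order.TTheory GRing.Theory Num.Theory.
Local Open Scope ring_scope.
Local Open Scope fset_scope.

Definition other (d : domino) : cell :=
  if d.2 then ((d.1.1 + 1)%R, d.1.2) else (d.1.1, (d.1.2 + 1)%R).

Lemma dcellsE d z : (z \in dcells d) = (z == d.1) || (z == other d).
Proof. by rewrite /dcells in_fset2. Qed.

Lemma color_other d : color (other d) = ~~ color d.1.
Proof.
rewrite /other /color; case: d => [[x y] b] /=.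
by case: b => /=; apply/idP/idP => h; lia.
Qed.

Definition colcell (col : bool) (d : domino) : cell :=
  if color d.1 == col then d.1 else other d.

Lemma colcell_in col d : colcell col d \in dcells d.
Proof. by rewrite dcellsE /colcell; case: ifP => _; rewrite eqxx ?orbT. Qed.

Lemma colcell_col col d : color (colcell col d) = col.
Proof.
rewrite /colcell; case: eqP => // h; rewrite color_other.
by case: col h; case: (color d.1).
Qed.

Lemma colcell_uniq col d z : z \in dcells d -> color z = col -> z = colcell col d.
Proof.
rewrite dcellsE /colcell => /orP [] /eqP -> <-; first by rewrite eqxx.
by rewrite color_other; case: (color d.1).
Qed.

Lemma coveredP D z : reflect (exists2 d, d \in D & z \in dcells d) (covered D z).
Proof. exact: hasP. Qed.

Definition colset (A : {fset cell}) b := [fset z in A | color z == b].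

Lemma ncol_eq P D col : packing P D ->
  ncol P col = (#|` D| + #|` colset (uncovered P D) col|)%N.
Proof.
move=> [sub disj].
have inj : {in D &, injective (colcell col)}.
  move=> d d' hd hd' e; apply/eqP; apply: contraT => ne.
  have := disj d d' hd hd' ne; move/fsetP/(_ (colcell col d)).
  by rewrite in_fsetI colcell_in e colcell_in in_fset0.
set G := [fset colcell col d | d in D].
set U := colset (uncovered P D) col.
have cG : #|` G| = #|` D| by rewrite card_in_imfset //= -cardfE.
have eS : [fset z in P | color z == col] = G `|` U.
  apply/fsetP => z; rewrite in_fsetU !inE /=.
  apply/idP/idP.
  - move=> /andP [zP /eqP zc].
    case: (boolP (covered D z)) => cv.
    + apply/orP; left; apply/imfsetP.
      case/coveredP: cv => d hd zd; exists d => //; exact: colcell_uniq.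
    + by apply/orP; right; rewrite zP zc eqxx.
  - case/orP.
    + case/imfsetP => d /= hd ->; rewrite colcell_col eqxx andbT.
      by apply: (fsubsetP (sub d hd)); exact: colcell_in.
    + by case/andP => /andP [-> _] ->.
have dGU : G `&` U = fset0.
  apply/fsetP => z; rewrite in_fsetI in_fset0; apply/negP => /andP [zG].
  rewrite !inE => /andP [/andP [_ ncv] _].
  case/imfsetP: zG => d /= hd ez; move/negP: ncv; apply.
  by apply/coveredP; exists d => //; rewrite ez colcell_in.
by rewrite /ncol eS cardfsU dGU cardfs0 subn0 cG.
Qed.

Lemma card_split_col (A : {fset cell}) b :
  #|` A| = (#|` colset A b| + #|` colset A (~~ b)|)%N.
Proof.
rewrite /colset.
have e1 : A `&` [fset z in A | color z == b] = [fset z in A | color z == b].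
  by apply/fsetP => z; rewrite !inE; case: (z \in A).
have e2 : A `\` [fset z in A | color z == b] = [fset z in A | color z == ~~ b].
  apply/fsetP => z; rewrite !inE; case: (z \in A); rewrite ?andbF //=.
  by case: (color z); rewrite ?eqxx /= ?eqb_id ?eqbF_neg ?negbK /=; case: (b) => /=.
by rewrite -(cardfsID [fset z in A | color z == b] A) e1 e2.
Qed.

Lemma assemble P D0 c : packing P D0 ->
  (forall z, z \in P -> ~~ covered D0 z -> color z = c) ->
  max_packing P D0 /\
  (forall (black : bool) (D : {fset domino}),
      (ncol P (~~ black) <= ncol P black)%N ->
      max_packing P D ->
      #|` uncovered P D| = (ncol P black - ncol P (~~ black))%N).
Proof.
move=> pk unc.
have e0 : colset (uncovered P D0) (~~ c) = fset0.
  apply/fsetP => z; rewrite !inE; apply/negP => /andP [/andP [zP ncv] /eqP zc].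
  by move: zc; rewrite (unc z zP ncv); case: (c).
have h0 : ncol P (~~ c) = #|` D0| by rewrite (ncol_eq _ _ (~~ c) pk) e0 cardfs0 addn0.
have bnd : forall D, packing P D -> (#|` D| <= #|` D0|)%N.
  by move=> D pD; rewrite -h0 (ncol_eq _ _ (~~ c) pD) leq_addr.
split; first by split.
move=> black D hb [pD mD].
have eN : #|` D| = #|` D0| by apply/eqP; rewrite eqn_leq bnd // mD.
have hc := ncol_eq _ _ c pD; have hnc := ncol_eq _ _ (~~ c) pD.
have sp := card_split_col (uncovered P D) c.
have Uf0 : #|` colset (uncovered P D) (~~ c)| = 0%N.
  move: hnc; rewrite h0 -eN; move/eqP.
  rewrite -{1}[#|` D|]addn0 eqn_add2l eq_sym; by move/eqP.
rewrite sp Uf0 addn0.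
have [->|nbc] := eqVneq black c; first by rewrite hc hnc Uf0 addn0 addKn.
have eb : black = ~~ c by move: nbc; case: (black); case: (c).
subst black.
move: hb; rewrite negbK hc hnc Uf0 addn0 -{2}[#|` D|]addn0 leq_add2l leqn0 => /eqP ->.
by rewrite addn0 subnn.
Qed.

Lemma in_box a b c d (p : cell) :
  (p \in box a b c d) = [&& a <= p.1, p.1 < b, c <= p.2 & p.2 < d].
Proof.
rewrite /box; apply/imfsetP/idP => /=.
- case=> q /allpairsP [[i j] /= [hi hj ->]] ->.
  move: hi hj; rewrite /ilen; case: ifP => hab; case: ifP => hcd; rewrite /= ?mem_iota ?in_nil //; lia.
- case: p => x y /= h; exists (x, y) => //; apply/allpairsP.
  exists (`|x - a|%N, `|y - c|%N); rewrite /= !mem_iota /ilen.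
  have -> : a <= b by lia.
  have -> : c <= d by lia.
  split; [lia|lia|congr pair; lia].
Qed.

Definition sf (L : {fset cell}) (n : nat) : int :=
  if ((-1)%R, n%:Z) \in L then -1 else 0.
Definition ef (l : nat) (R : {fset cell}) (n : nat) : int :=
  l%:Z + (if (l%:Z, n%:Z) \in R then 1 else 0).

Lemma inP (k l : nat) (L R : {fset cell}) :
  L `<=` box (-1) 0 0 k%:Z -> R `<=` box l%:Z (l%:Z + 1)%R 0 k%:Z ->
  forall x y, ((x, y) \in L `|` R `|` box 0 l%:Z 0 k%:Z) =
    [&& 0 <= y, y < k%:Z, sf L `|y| <= x & x < ef l R `|y|].
Proof.
move=> hL hR x y.
have yE : 0 <= y -> y = `|y|%:Z by move=> h; lia.
rewrite !in_fsetU in_box /sf /ef /=.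
apply/idP/idP.
- case/orP => [/orP [hl|hr]|hb].
  + have := fsubsetP hL _ hl; rewrite in_box /= => hb.
    have -> : ((-1)%R, `|y|%:Z) \in L.
      by have -> : ((-1)%R, `|y|%:Z) = (x, y) by congr pair; lia.
    case: ifP => _; lia.
  + have := fsubsetP hR _ hr; rewrite in_box /= => hb.
    have -> : (l%:Z, `|y|%:Z) \in R.
      by have -> : (l%:Z, `|y|%:Z) = (x, y) by congr pair; lia.
    case: ifP => _; lia.
  + case: ifP => _; case: ifP => _; lia.
- move=> hb; have y0 : 0 <= y by lia.
  have [ex|nx] := eqVneq x (-1).
    move: hb; case: ifP => hl; last by case: ifP => _; lia.
    by rewrite -(yE y0) -ex in hl; rewrite hl.
  have [ex|nl] := eqVneq x l%:Z.
    move: hb; case: ifP => _; case: ifP => hr;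
      try (by rewrite -(yE y0) in hr; rewrite ex hr orbT); lia.
  apply/orP; right; move: hb; case: ifP => _; case: ifP => _; lia.
Qed.

Record prm := Prm { pA : nat -> int; pf : nat -> bool; pm : nat -> nat;
                    pn : nat -> nat; pu : nat -> bool }.

Definition hh (p : prm) n : int := (pm p n + pn p n)%N%:Z.
Definition hu (p : prm) n : int := (pm p n + pn p n + pu p n)%N%:Z.

Definition rowown (p : prm) (n : nat) (x : int) : option domino :=
  let y := n%:Z in
  let j := x - pA p n in
  if (0 <= j) && (j < hh p n) then
    (if (2 %| j)%Z == pf p n then Some ((x, y - 1), false) else Some ((x, y), false))
  else if (0 <= j) && (j < hu p n) then None
  else if j < 0 then (if (2 %| j)%Z then Some ((x, y), true) else Some ((x - 1, y), true))
  else (if (2 %| j - hu p n)%Z then Some ((x, y), true) else Some ((x - 1, y), true)).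

Definition own (k : nat) (p : prm) (z : cell) : option domino :=
  if (0 <= z.2) && (z.2 < k%:Z) then rowown p `|z.2| z.1 else None.

Lemma own_row k p x n : own k p (x, n%:Z) = if (n < k)%N then rowown p n x else None.
Proof. by rewrite /own /= ltz_nat. Qed.

Lemma rowown_V p n x : 0 <= x - pA p n -> x - pA p n < hh p n ->
  rowown p n x = if (2 %| x - pA p n)%Z == pf p n then Some ((x, n%:Z - 1), false)
                 else Some ((x, n%:Z), false).
Proof. by move=> h1 h2; rewrite /rowown h1 h2. Qed.

Lemma rowown_U p n x : hh p n <= x - pA p n -> x - pA p n < hu p n -> rowown p n x = None.
Proof.
move=> h1 h2; rewrite /rowown; have -> : (0 <= x - pA p n) && (x - pA p n < hh p n) = false.
  by rewrite /hh in h1 *; lia.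
by have -> : (0 <= x - pA p n) && (x - pA p n < hu p n) by rewrite /hh /hu in h1 h2 *; lia.
Qed.

Lemma rowown_L p n x : x < pA p n ->
  rowown p n x = if (2 %| x - pA p n)%Z then Some ((x, n%:Z), true) else Some ((x - 1, n%:Z), true).
Proof.
move=> h; rewrite /rowown.
have -> : (0 <= x - pA p n) && (x - pA p n < hh p n) = false by lia.
have -> : (0 <= x - pA p n) && (x - pA p n < hu p n) = false by lia.
by have -> : x - pA p n < 0 by lia.
Qed.

Lemma rowown_R p n x : hu p n <= x - pA p n ->
  rowown p n x = if (2 %| x - pA p n - hu p n)%Z then Some ((x, n%:Z), true)
                 else Some ((x - 1, n%:Z), true).
Proof.
move=> h; rewrite /rowown.
have -> : (0 <= x - pA p n) && (x - pA p n < hh p n) = false by rewrite /hh /hu in h *; lia.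
have -> : (0 <= x - pA p n) && (x - pA p n < hu p n) = false by rewrite /hh /hu in h *; lia.
by have -> : (x - pA p n < 0) = false by rewrite /hh /hu in h *; lia.
Qed.

Definition RowOK (k : nat) (s e : nat -> int) (c : bool) (p : prm) (n : nat) : Prop :=
  [/\ (0 <= pA p n)%R /\ (2 %| pA p n - s n)%Z,
      (pA p n + hu p n <= k%:Z + 1)%R, (2 %| e n - (pA p n + hu p n))%Z,
      (if pf p n then (pn p n <= pm p n <= (pn p n).+1)%N
       else (pm p n <= pn p n <= (pm p n).+1)%N) &
      (pu p n -> [/\ pm p n = 0%N, pn p n = 0%N & color (pA p n, n%:Z) = c])].

Definition Inter (p : prm) (n : nat) : Prop :=
  pm p n.+1 = pn p n /\
  ((0 < pn p n)%N -> (pA p n + (pf p n : nat)%:Z = pA p n.+1 + 1 - (pf p n.+1 : nat)%:Z)%R).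

Definition Good k s e c p : Prop :=
  [/\ forall n, (n < k)%N -> RowOK k s e c p n,
      forall n, (n.+1 < k)%N -> Inter p n,
      ((0 < k)%N -> pm p 0 = 0%N) &
      forall n, n.+1 = k -> pn p n = 0%N].

Definition inPr (k : nat) (s e : nat -> int) (w : cell) : bool :=
  [&& (0 <= w.2)%R, (w.2 < k%:Z)%R, (s (absz w.2) <= w.1)%R & (w.1 < e (absz w.2))%R].

Lemma own_ok k s e c p n x d :
  Good k s e c p -> (forall n, (-1 <= s n <= 0)%R) -> (forall n, (n < k)%N -> (k%:Z + 1 <= e n)%R) ->
  (n < k)%N -> (s n <= x < e n)%R -> rowown p n x = Some d ->
  (x, n%:Z) \in dcells d /\
  forall w, w \in dcells d -> inPr k s e w /\ own k p w = Some d.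
Proof.
move=> [Gr Gi Gm0 Gnk] hs he nk hx.
have [[A0 As] AB Be R3 U] := Gr n nk.
have hsn := hs n; have hen := he n nk.
have hE : (hu p n = hh p n + (pu p n : nat)%:Z)%R by rewrite /hu /hh PoszD.
have hE2 : (hh p n = (pm p n)%:Z + (pn p n)%:Z)%R by rewrite /hh PoszD.
have [xL|xA] := ltP x (pA p n).
  rewrite rowown_L //; case: ifP => ev [<-]; rewrite dcellsE /other /=.
  - split; first by rewrite eqxx.
    move=> w; rewrite dcellsE /other /= => /orP [] /eqP ->; rewrite /inPr /= own_row nk.
    + split; first lia. by rewrite rowown_L ?ev.
    + split; first lia. rewrite rowown_L; last lia.
      have -> : (2 %| x + 1 - pA p n)%Z = false by lia. by rewrite addrK.
  - split; first by rewrite addrNK eqxx orbT.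
    move=> w; rewrite dcellsE /other /= => /orP [] /eqP ->; rewrite /inPr /= own_row nk.
    + split; first lia. rewrite rowown_L; last lia.
      by have -> : (2 %| x - 1 - pA p n)%Z by lia.
    + split; first lia. by rewrite addrNK rowown_L ?ev.
have [xR|xnR] := lerP (hu p n) (x - pA p n).
  rewrite rowown_R //; case: ifP => ev [<-]; rewrite dcellsE /other /=.
  - split; first by rewrite eqxx.
    move=> w; rewrite dcellsE /other /= => /orP [] /eqP ->; rewrite /inPr /= own_row nk.
    + split; first lia. by rewrite rowown_R ?ev.
    + split; first lia. rewrite rowown_R; last lia.
      have -> : (2 %| x + 1 - pA p n - hu p n)%Z = false by lia. by rewrite addrK.
  - split; first by rewrite addrNK eqxx orbT.
    move=> w; rewrite dcellsE /other /= => /orP [] /eqP ->; rewrite /inPr /= own_row nk.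
    + split; first lia. rewrite rowown_R; last lia.
      by have -> : (2 %| x - 1 - pA p n - hu p n)%Z by lia.
    + split; first lia. by rewrite addrNK rowown_R ?ev.
have [xV|xU] := ltP (x - pA p n) (hh p n); last first.
  by rewrite rowown_U //; lia.
have jA : 0 <= x - pA p n by lia.
have e1 : forall m : nat, (m.+1%:Z - 1 = m%:Z)%R by move=> m; rewrite -addn1 PoszD addrK.
have e2 : forall m : nat, (m%:Z + 1 = m.+1%:Z)%R by move=> m; rewrite -addn1 PoszD.
rewrite rowown_V //; case: ifP => ev [<-]; rewrite dcellsE /other /=.
-
  case: n nk hx A0 As AB Be R3 U hsn hen hE hE2 xA xnR xV jA ev => [|n'] nk hx A0 As AB Be R3 U hsn hen hE hE2 xA xnR xV jA ev.
    exfalso; move: R3 ev; rewrite (Gm0 nk); case: (pf p 0) => /= R3; rewrite ?eqb_id ?eqbF_neg => ev; lia.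
  have [[A0' As'] AB' Be' R3' U'] := Gr n' (ltnW nk).
  have [Im Ip] := Gi n' nk.
  have hE' : (hu p n' = hh p n' + (pu p n' : nat)%:Z)%R by rewrite /hu /hh PoszD.
  have hE2' : (hh p n' = (pm p n')%:Z + (pn p n')%:Z)%R by rewrite /hh PoszD.
  have hs' := hs n'; have he' := he n' (ltnW nk).
  rewrite Im in R3.
  have pn0 : (0 < pn p n')%N.
    move: R3 ev; case: (pf p n'.+1) => /= R3; rewrite ?eqb_id ?eqbF_neg => ev; lia.
  have {}Ip := Ip pn0.
  rewrite e1; split; first by rewrite e2 eqxx orbT.
  move=> w; rewrite dcellsE /other /= => /orP [] /eqP ->; rewrite /inPr /=.
  + rewrite own_row (ltnW nk) rowown_V.
    * split; first lia.
      case Ef : (pf p n'.+1) in R3 ev Ip; case Ef' : (pf p n') in R3' Ip *;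
        rewrite /= ?eqb_id ?eqbF_neg in R3 R3' ev *; case: ifP => H;
        first [ done | (exfalso; lia) ].
    * case Ef : (pf p n'.+1) in R3 ev Ip; case Ef' : (pf p n') in R3' Ip *;
        rewrite /= ?eqb_id ?eqbF_neg in R3 R3' ev *; lia.
    * case Ef : (pf p n'.+1) in R3 ev Ip; case Ef' : (pf p n') in R3' Ip *;
        rewrite /= ?eqb_id ?eqbF_neg in R3 R3' ev *; lia.
  + rewrite e2 /= ?addn1 own_row nk; split; first lia.
    by rewrite rowown_V // ev e1.
-
  have pn0 : (0 < pn p n)%N by move: R3 ev; case: (pf p n) => /= R3; rewrite ?eqb_id ?eqbF_neg => ev; lia.
  have nk' : (n.+1 < k)%N.
    rewrite ltn_neqAle nk andbT; apply/eqP => ek; move: (Gnk n ek); lia.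
  have [[A0' As'] AB' Be' R3' U'] := Gr n.+1 nk'.
  have [Im Ip] := Gi n nk'.
  have {}Ip := Ip pn0.
  have hE' : (hu p n.+1 = hh p n.+1 + (pu p n.+1 : nat)%:Z)%R by rewrite /hu /hh PoszD.
  have hE2' : (hh p n.+1 = (pm p n.+1)%:Z + (pn p n.+1)%:Z)%R by rewrite /hh PoszD.
  have hs' := hs n.+1; have he' := he n.+1 nk'.
  rewrite Im in R3'.
  split; first by rewrite eqxx.
  move=> w; rewrite dcellsE /other /= => /orP [] /eqP ->; rewrite /inPr /=.
  + rewrite own_row nk; split; first lia.
    by rewrite rowown_V // ev.
  + rewrite e2 /= ?addn1 own_row nk' rowown_V.
    * split; first lia.
      case Ef : (pf p n) in R3 ev Ip; case Ef' : (pf p n.+1) in R3' Ip *;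
        rewrite /= ?eqb_id ?eqbF_neg in R3 R3' ev *; case: ifP => H;
        first [ by rewrite e1 | (exfalso; lia) ].
    * case Ef : (pf p n) in R3 ev Ip; case Ef' : (pf p n.+1) in R3' Ip *;
        rewrite /= ?eqb_id ?eqbF_neg in R3 R3' ev *; lia.
    * case Ef : (pf p n) in R3 ev Ip; case Ef' : (pf p n.+1) in R3' Ip *;
        rewrite /= ?eqb_id ?eqbF_neg in R3 R3' ev *; lia.
Qed.


Lemma own_okz k s e c p z d :
  Good k s e c p -> (forall n, (-1 <= s n <= 0)%R) -> (forall n, (n < k)%N -> (k%:Z + 1 <= e n)%R) ->
  inPr k s e z -> own k p z = Some d ->
  z \in dcells d /\ forall w, w \in dcells d -> inPr k s e w /\ own k p w = Some d.
Proof.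
case: z => x y G hs he; rewrite /inPr /= => hz.
have -> : y = (absz y)%:Z by lia.
rewrite own_row; case: ifP => nk; last by lia.
apply: own_ok G hs he nk _; lia.
Qed.

Lemma own_nonez k s e c p z :
  Good k s e c p -> inPr k s e z -> own k p z = None -> color z = c.
Proof.
case: z => x y [Gr _ _ _]; rewrite /inPr /= => hz.
have -> : y = (absz y)%:Z by lia.
rewrite own_row; case: ifP => nk; last by lia.
set n := absz y.
have [[A0 As] AB Be R3 U] := Gr n nk.
have hE : (hu p n = hh p n + (pu p n : nat)%:Z)%R by rewrite /hu /hh PoszD.
have hE2 : (hh p n = (pm p n)%:Z + (pn p n)%:Z)%R by rewrite /hh PoszD.
have [xL|xA] := ltP x (pA p n); first by rewrite rowown_L //; case: ifP.
have [xR|xnR] := lerP (hu p n) (x - pA p n); first by rewrite rowown_R //; case: ifP.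
have [xV|xU] := ltP (x - pA p n) (hh p n); first by rewrite rowown_V; [case: ifP| lia| lia].
move=> _; move: U; case: (pu p n) hE => hE; last by lia.
case=> // pm0 pn0 col; have -> : x = pA p n by lia.
done.
Qed.

Lemma own_center k s e c p n x :
  Good k s e c p -> (n < k)%N -> (k%:Z + 1 <= x)%R ->
  exists b, rowown p n x = Some (b, true).
Proof.
move=> [Gr _ _ _] nk hx.
have [[A0 As] AB Be R3 U] := Gr n nk.
rewrite rowown_R; last lia.
by case: ifP => _; eexists.
Qed.


Arguments own_okz {k s e c p z d}.
Arguments own_nonez {k s e c p z}.
Arguments own_center {k s e c p n x}.

Lemma construct (k l : nat) (L R : {fset cell}) c p :
  L `<=` box (-1) 0 0 k%:Z -> R `<=` box l%:Z (l%:Z + 1)%R 0 k%:Z -> (2 * k <= l)%N ->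
  Good k (sf L) (ef l R) c p ->
  exists D, [/\ packing (L `|` R `|` box 0 l%:Z 0 k%:Z) D,
    (forall z, z \in L `|` R `|` box 0 l%:Z 0 k%:Z -> ~~ covered D z -> color z = c),
    (forall z, z \in box (k%:Z + 1)%R (l%:Z - k%:Z - 1)%R 0 k%:Z -> covered D z) &
    (forall d, d \in D ->
       (exists2 z, z \in box (k%:Z + 1)%R (l%:Z - k%:Z - 1)%R 0 k%:Z & z \in dcells d) ->
       horizontal d)].
Proof.
move=> hL hR hl G.
set P := L `|` R `|` box 0 l%:Z 0 k%:Z.
have PE : forall z, (z \in P) = inPr k (sf L) (ef l R) z.
  by case=> x y; rewrite /P (inP k l L R hL hR).
have hs : forall n, (-1 <= sf L n <= 0)%R by move=> n; rewrite /sf; case: ifP.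
have he : forall n, (n < k)%N -> (k%:Z + 1 <= ef l R n)%R.
  by move=> n nk; rewrite /ef; case: ifP => _; lia.
set D := [fset odflt ((0, 0), true) (own k p z) | z in P & own k p z != None].
have DP : forall d, reflect (exists2 z, z \in P & own k p z = Some d) (d \in D).
  move=> d; rewrite /D; apply: (iffP idP) => [/imfsetP [z /= /andP [zP]]|[z zP ez]].
    by case E: (own k p z) => [d1|] //= _ ->; exists z.
  apply/imfsetP; exists z; last by rewrite ez.
  by rewrite inE; apply/andP; split; [exact: zP | rewrite ez].
have ownD : forall d, d \in D -> forall w, w \in dcells d -> w \in P /\ own k p w = Some d.
  move=> d /DP [z zP ez] w wd; rewrite PE in zP.
  have [_ /(_ w wd) [wP ->]] := own_okz G hs he zP ez.
  by rewrite PE.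
have cov : forall z, z \in P -> own k p z != None -> covered D z.
  move=> z zP; case ez : (own k p z) => [d|] // _; apply/coveredP; exists d.
    by apply/DP; exists z.
  have zP' := zP; rewrite PE in zP'. by have [] := own_okz G hs he zP' ez.
exists D; split.
- split.
  + by move=> d dD; apply/fsubsetP => w wd; have [] := ownD d dD w wd.
  + move=> d d' dD d'D ne; apply/fsetP => w; rewrite in_fsetI in_fset0.
    apply/negP => /andP [wd wd']; move/negP: ne; apply.
    have [_ e1] := ownD d dD w wd; have [_ e2] := ownD d' d'D w wd'.
    by rewrite e1 in e2; case: e2 => ->.
- move=> z zP ncv; have zP' := zP; rewrite PE in zP'.
  apply: own_nonez G zP' _.
  by case ez : (own k p z) => [d|] //; move/negP: ncv; case; apply: cov => //; rewrite ez.
- case=> x y; rewrite in_box /= => hz; apply: cov.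
    by rewrite PE /inPr /=; rewrite /sf /ef; case: ifP => _; case: ifP => _; lia.
  have -> : y = (absz y)%:Z by lia.
  rewrite own_row; have -> : (absz y < k)%N by lia.
  have nk : (absz y < k)%N by lia.
  have hx : (k%:Z + 1 <= x)%R by lia.
  by have [b ->] := own_center G nk hx.
- move=> d dD [[x y] zc zd].
  have [_ e1] := ownD d dD _ zd.
  move: zc; rewrite in_box /= => hz.
  move: e1; have -> : y = (absz y)%:Z by lia.
  rewrite own_row; have nk : (absz y < k)%N by lia.
  rewrite nk.
  have hx : (k%:Z + 1 <= x)%R by lia.
  by have [b ->] := own_center G nk hx; case=> <-.
Qed.

Local Close Scope fset_scope.

Definition dd (s e : nat -> int) (c : bool) (n : nat) : int :=
  if (2 %| e n - s n)%Z then 0 else if (2 %| s n + n%:Z)%Z == c then 1 else -1.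

Definition sumd s e c (a b : nat) : int := \sum_(a <= i < b) dd s e c i.

Lemma sumd_nil s e c a : sumd s e c a a = 0.
Proof. by rewrite /sumd big_geq. Qed.

Lemma sumdS s e c a b : (a <= b)%N -> sumd s e c a b.+1 = sumd s e c a b + dd s e c b.
Proof. by move=> h; rewrite /sumd big_nat_recr. Qed.

Lemma sumd_split s e c a b d : (a <= b)%N -> (b <= d)%N ->
  sumd s e c a d = sumd s e c a b + sumd s e c b d.
Proof. by move=> h1 h2; rewrite /sumd -big_cat_nat. Qed.

Lemma dd_cases s e c n :
  [\/ dd s e c n = 0 /\ (2 %| e n - s n)%Z,
      dd s e c n = 1 /\ ~~ (2 %| e n - s n)%Z /\ (2 %| s n + n%:Z)%Z = c |
      dd s e c n = -1 /\ ~~ (2 %| e n - s n)%Z /\ (2 %| s n + n%:Z)%Z = ~~ c].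
Proof.
rewrite /dd; case: ifP => h; first by constructor 1.
case: eqP => h2; first by constructor 2.
constructor 3; split => //; split => //; move: h2; case: (2 %| _)%Z; case: c => //.
Qed.

Fixpoint AF (s : nat -> int) (y0 n : nat) : int * bool :=
  match n with
  | 0 => (s y0, false)
  | n'.+1 => if (n'.+1 <= y0)%N then (s y0, false) else
      let pr := AF s y0 n' in
      let q := pr.1 + (pr.2 : nat)%:Z in
      let f := (2 %| q - s n'.+1)%Z in
      (if f then q else q - 1, f)
  end.

Lemma AF_y0 s y0 : AF s y0 y0 = (s y0, false).
Proof. by case: y0 => //= n; rewrite leqnn. Qed.

Lemma AF_S s y0 n : (y0 <= n)%N ->
  AF s y0 n.+1 =
  (let q := (AF s y0 n).1 + ((AF s y0 n).2 : nat)%:Z in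
   let f := (2 %| q - s n.+1)%Z in (if f then q else q - 1, f)).
Proof. by move=> h /=; rewrite leqNgt ltnS h. Qed.

Lemma AF_par s y0 n : (y0 <= n)%N -> (2 %| (AF s y0 n).1 - s n)%Z.
Proof.
case: n => [|n] h; first by move: h; rewrite leqn0 => /eqP <-; rewrite AF_y0 /= subrr.
have [->|lt] := eqVneq y0 n.+1; first by rewrite AF_y0 /= subrr.
rewrite AF_S /=; last by lia.
case: ifP => hh /=; lia.
Qed.

Lemma AF_q s y0 n : (y0 <= n)%N ->
  (2 %| (AF s y0 n).1 + ((AF s y0 n).2 : nat)%:Z + n%:Z - s y0 - y0%:Z)%Z.
Proof.
elim: n => [|n IH] h.
  by move: h; rewrite leqn0 => /eqP ->; rewrite AF_y0 /=; lia.
have [->|lt] := eqVneq y0 n.+1; first by rewrite AF_y0 /=; lia.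
have h' : (y0 <= n)%N by lia.
rewrite AF_S //=; have := IH h'.
case: ifP => hh /=; lia.
Qed.

Lemma col_same s e c a b : dd s e c a = dd s e c b -> dd s e c a != 0 ->
  (2 %| s a + a%:Z)%Z = (2 %| s b + b%:Z)%Z.
Proof.
case: (dd_cases s e c a) => [[->]|[-> [_ ->]]|[-> [_ ->]]] //;
case: (dd_cases s e c b) => [[->]|[-> [_ ->]]|[-> [_ ->]]] //.
Qed.

Lemma col_opp s e c a b : dd s e c a = - dd s e c b -> dd s e c a != 0 ->
  (2 %| s a + a%:Z)%Z = ~~ (2 %| s b + b%:Z)%Z.
Proof.
case: (dd_cases s e c a) => [[->]|[-> [_ ->]]|[-> [_ ->]]] //;
case: (dd_cases s e c b) => [[->]|[-> [_ ->]]|[-> [_ ->]]] //; by rewrite ?negbK.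
Qed.

Lemma col_same' s e c a b : dd s e c a = dd s e c b -> dd s e c a != 0 ->
  (2 %| (s a + a%:Z) - (s b + b%:Z))%Z.
Proof. move=> h1 h2; have := col_same _ _ _ _ _ h1 h2; case E: (2 %| s b + b%:Z)%Z => h; lia. Qed.

Lemma col_opp' s e c a b : dd s e c a = - dd s e c b -> dd s e c a != 0 ->
  ~~ (2 %| (s a + a%:Z) - (s b + b%:Z))%Z.
Proof. move=> h1 h2; have := col_opp _ _ _ _ _ h1 h2; case E: (2 %| s b + b%:Z)%Z => h; lia. Qed.

Lemma dd_val s e c n : dd s e c n = 0 \/ dd s e c n = 1 \/ dd s e c n = -1.
Proof. by case: (dd_cases s e c n) => [[->]|[-> _]|[-> _]]; auto. Qed.

Lemma episode k s e c y0 y1 :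
  (y0 < y1)%N -> (y1 < k)%N ->
  sumd s e c y0 y1.+1 = 0 ->
  (forall n, (y0 <= n < y1)%N -> sumd s e c y0 n.+1 != 0) ->
  exists p, [/\ forall n, (y0 <= n <= y1)%N -> RowOK k s e c p n,
               forall n, (y0 <= n < y1)%N -> Inter p n,
               pm p y0 = 0%N & pn p y1 = 0%N].
Proof.
move=> y01 y1k Fy1 Fnz.
set F := fun n => sumd s e c y0 n.+1.
have F0 : F y0 = dd s e c y0 by rewrite /F sumdS // sumd_nil add0r.
have FS : forall n, (y0 <= n)%N -> F n.+1 = F n + dd s e c n.+1.
  by move=> n h; rewrite /F sumdS //; lia.
have [sg hsg] : exists sg, dd s e c y0 = sg by eexists.
have sgv : sg = 1 \/ sg = -1.
  have := Fnz y0; rewrite leqnn y01 => /(_ isT); rewrite -/(F y0) F0 hsg.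
  by case: (dd_cases s e c y0) => [[]|[]|[]]; rewrite hsg => ->; auto.
have pos : forall n, (y0 <= n < y1)%N -> 0 < sg * F n.
  elim=> [|n IH] /andP [h1 h2].
    move: h1; rewrite leqn0 => /eqP e0; subst y0; rewrite F0 hsg; case: sgv => ->; lia.
  have [e0|ne] := eqVneq y0 n.+1.
    subst y0; rewrite F0 hsg; case: sgv => ->; lia.
  have h1' : (y0 <= n)%N by lia.
  have := IH (introT andP (conj h1' (ltnW h2))).
  have := Fnz n.+1; rewrite -/(F n.+1) h1 h2 => /(_ isT).
  rewrite FS //; case: (dd_cases s e c n.+1) => [[]|[]|[]] -> _;
    case: sgv => ->; lia.
set A0 := fun n => (AF s y0 n).1.
set fb := fun n => (AF s y0 n).2.
set mm := fun n => if (n <= y0)%N then 0%N else `|F n.-1|%N.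
set nn := fun n => `|F n|%N.
have R3 : forall n, (y0 <= n <= y1)%N ->
    if fb n then (nn n <= mm n <= (nn n).+1)%N else (mm n <= nn n <= (mm n).+1)%N.
  move=> n /andP [h1 h2].
  have [en|ne] := eqVneq n y0.
    by subst n; rewrite /fb /mm /nn AF_y0 leqnn /= F0 hsg; case: sgv => ->.
  case: n h1 h2 ne => [|n'] h1 h2 ne; first lia.
  have h1' : (y0 <= n')%N by lia.
  have Q := AF_q s y0 n' h1'.
  have Pn := pos n' (introT andP (conj h1' h2)).
  have mmE : mm n'.+1 = `|F n'|%N by rewrite /mm ifN //; lia.
  rewrite mmE /fb /nn AF_S //= FS //.
  have Cs : dd s e c n'.+1 = sg -> (2 %| (s n'.+1 + n'.+1%:Z) - (s y0 + y0%:Z))%Z.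
    move=> H; apply: (col_same' s e c n'.+1 y0); first by rewrite H hsg.
    by rewrite H; case: sgv => ->.
  have Co : dd s e c n'.+1 = - sg -> ~~ (2 %| (s n'.+1 + n'.+1%:Z) - (s y0 + y0%:Z))%Z.
    move=> H; apply: (col_opp' s e c n'.+1 y0); first by rewrite H hsg.
    by rewrite H; case: sgv => ->.
  move: (dd_val s e c n'.+1) Cs Co Q Pn; rewrite -/(A0 n') -/(fb n').
  case: ifP => H; case: sgv => ->; lia.
have mmS : forall n, (y0 <= n)%N -> mm n.+1 = nn n.
  by move=> n h; rewrite /mm /nn ifN //; lia.
have AS : forall n, (y0 <= n)%N ->
    A0 n.+1 = A0 n + (fb n : nat)%:Z - 1 + (fb n.+1 : nat)%:Z.
  move=> n h; rewrite /A0 /fb AF_S //=; case: ifP => _ /=; lia.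
set B := fun n => A0 n + (mm n + nn n)%N%:Z.
have nn0 : nn y0 = 1%N by rewrite /nn F0 hsg; case: sgv => ->.
have mm0 : mm y0 = 0%N by rewrite /mm leqnn.
have span : forall n, (y0 <= n <= y1)%N -> exists lo hi : int,
   [/\ forall i, (y0 <= i <= n)%N -> lo <= A0 i /\ B i <= hi, lo <= A0 n, B n <= hi &
       hi - lo <= (nn n)%:Z + (n - y0)%N%:Z].
  elim=> [|n IH] /andP [h1 h2].
    move: h1; rewrite leqn0 => /eqP e0; subst y0.
    exists (A0 0), (B 0); split => //; last by rewrite /B mm0 nn0; lia.
      by move=> i hi; have -> : i = 0%N by lia.
  have [e0|ne] := eqVneq y0 n.+1.
    subst y0; exists (A0 n.+1), (B n.+1); split => //; last by rewrite /B mm0 nn0; lia.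
      by move=> i hi; have -> : i = n.+1 by lia.
  have h1' : (y0 <= n)%N by lia.
  have [lo [hi [H1 H2 H3 H4]]] := IH (introT andP (conj h1' (ltnW h2))).
  have r3 := R3 n (introT andP (conj h1' (ltnW h2))).
  have r3' := R3 n.+1 (introT andP (conj (ltnW (leq_ltn_trans h1' (ltnSn n))) h2)).
  have ms := mmS n h1'; have hAS := AS n h1'.
  rewrite ms in r3'.
  have hB : B n.+1 = A0 n.+1 + (nn n)%:Z + (nn n.+1)%:Z by rewrite /B ms; lia.
  have hBn : B n = A0 n + (mm n)%:Z + (nn n)%:Z by rewrite /B; lia.
  have [lt|ge] := ltP (A0 n.+1) lo; have [lt'|ge'] := ltP hi (B n.+1).
  - exists (A0 n.+1), (B n.+1); split.
    + move=> i /andP [i1 i2]; have [->|ne'] := eqVneq i n.+1; first lia.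
      have := H1 i (introT andP (conj i1 (_ : (i <= n)%N))); lia.
    + lia. + lia.
    + move: r3 r3'; case: (fb n) hAS; case: (fb n.+1) => /= hAS r3 r3'; lia.
  - exists (A0 n.+1), hi; split.
    + move=> i /andP [i1 i2]; have [->|ne'] := eqVneq i n.+1; first lia.
      have := H1 i (introT andP (conj i1 (_ : (i <= n)%N))); lia.
    + lia. + lia.
    + move: r3 r3'; case: (fb n) hAS; case: (fb n.+1) => /= hAS r3 r3'; lia.
  - exists lo, (B n.+1); split.
    + move=> i /andP [i1 i2]; have [->|ne'] := eqVneq i n.+1; first lia.
      have := H1 i (introT andP (conj i1 (_ : (i <= n)%N))); lia.
    + lia. + lia.
    + move: r3 r3'; case: (fb n) hAS; case: (fb n.+1) => /= hAS r3 r3'; lia.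
  - exists lo, hi; split.
    + move=> i /andP [i1 i2]; have [->|ne'] := eqVneq i n.+1; first lia.
      have := H1 i (introT andP (conj i1 (_ : (i <= n)%N))); lia.
    + lia. + lia.
    + move: r3 r3'; case: (fb n) hAS; case: (fb n.+1) => /= hAS r3 r3'; lia.
have [lo [hi [H1 _ _ H4]]] := span y1 (introT andP (conj (ltnW y01) (leqnn y1))).
have nny1 : nn y1 = 0%N by rewrite /nn /F Fy1.
rewrite nny1 in H4.
set z := (lo %/ 2)%Z.
have zlo : 0 <= lo - 2 * z <= 1 by rewrite /z; lia.
exists (Prm (fun n => A0 n - 2 * z) fb mm nn (fun _ => false)); split => //=.
- move=> n hn; have r3 := R3 n hn.
  have [b1 b2] := H1 n hn.
  have Ap := AF_par s y0 n (_ : (y0 <= n)%N).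
  rewrite /RowOK /hu /=.
  split => //.
  + split; first lia. rewrite -/(A0 n) in Ap; lia.
  + move: b2; rewrite /B; lia.
  + have [en|ne] := eqVneq n y0.
      subst n; rewrite mm0 nn0; case: (dd_cases s e c y0) => [[D1 D2]|[D1 [D2 D3]]|[D1 [D2 D3]]].
      * by move: D1; rewrite hsg => D1; case: sgv; lia.
      * rewrite -/(A0 y0) in Ap; lia.
      * rewrite -/(A0 y0) in Ap; lia.
    case: n hn r3 b1 b2 Ap ne => [|n'] hn r3 b1 b2 Ap ne; first lia.
    have h1' : (y0 <= n')%N by lia.
    rewrite mmS // /nn FS // -/(A0 n'.+1) in Ap *.
    case: (dd_cases s e c n'.+1) => [[D1 D2]|[D1 [D2 D3]]|[D1 [D2 D3]]]; rewrite D1; lia.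
- move=> n /andP [h1 h2]; split; first by rewrite /= mmS.
  move=> _ /=; rewrite (AS n h1); lia.
Qed.


Arguments sumd_split {s e c a b d}.

Definition GoodFrom k s e c p y0 : Prop :=
  [/\ forall n, (y0 <= n < k)%N -> RowOK k s e c p n,
      forall n, (y0 <= n)%N -> (n.+1 < k)%N -> Inter p n,
      (y0 < k)%N -> pm p y0 = 0%N &
      forall n, (y0 <= n)%N -> n.+1 = k -> pn p n = 0%N].

Definition glue (y1 : nat) (p1 p2 : prm) : prm :=
  Prm (fun n => if (n <= y1)%N then pA p1 n else pA p2 n)
      (fun n => if (n <= y1)%N then pf p1 n else pf p2 n)
      (fun n => if (n <= y1)%N then pm p1 n else pm p2 n)
      (fun n => if (n <= y1)%N then pn p1 n else pn p2 n)
      (fun n => if (n <= y1)%N then pu p1 n else pu p2 n).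

Lemma RowOK_ext k s e c p p' n :
  pA p n = pA p' n -> pf p n = pf p' n -> pm p n = pm p' n -> pn p n = pn p' n ->
  pu p n = pu p' n -> RowOK k s e c p n -> RowOK k s e c p' n.
Proof. by rewrite /RowOK /hu /hh => -> -> -> -> ->. Qed.

Lemma glue_ok k s e c y0 y1 p1 p2 : (y0 <= y1)%N -> (y1 < k)%N ->
  (forall n, (y0 <= n <= y1)%N -> RowOK k s e c p1 n) ->
  (forall n, (y0 <= n < y1)%N -> Inter p1 n) -> pm p1 y0 = 0%N -> pn p1 y1 = 0%N ->
  GoodFrom k s e c p2 y1.+1 -> GoodFrom k s e c (glue y1 p1 p2) y0.
Proof.
move=> h01 h1k R1 I1 m0 n1 [R2 I2 m2 n2]; split.
- move=> n /andP [a b]; case: (leqP n y1) => h.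
    apply: (RowOK_ext _ _ _ _ p1); rewrite /= ?h //; apply: R1; by rewrite a h.
  have h' : (n <= y1)%N = false by rewrite leqNgt h.
  apply: (RowOK_ext _ _ _ _ p2); rewrite /= ?h' //; apply: R2; by rewrite h b.
- move=> n a b; rewrite /Inter /=.
  case: (ltngtP n y1) => h.
  + have h' : (n.+1 <= y1)%N by [].
    exact: I1 (introT andP (conj a h)).
  + have h' : (n <= y1)%N = false by rewrite leqNgt h.
    have h'' : (n.+1 <= y1)%N = false by rewrite leqNgt ltnS (ltnW h).
    rewrite ?h' ?h''; exact: I2.
  + subst n; rewrite ?leqnn ?ltnn /= n1 m2 //; split => //.
- by move=> _ /=; rewrite h01.
- move=> n a b /=; case: (leqP n y1) => h.
    by have -> : n = y1 by lia.
  by apply: n2.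
Qed.

Definition trow (s : nat -> int) (u : bool) : prm :=
  Prm (fun n => (s n %% 2)%Z) (fun _ => false) (fun _ => 0%N) (fun _ => 0%N) (fun _ => u).

Lemma trow_ok0 k s e c y0 : (y0 < k)%N -> dd s e c y0 = 0 -> RowOK k s e c (trow s false) y0.
Proof.
move=> yk; case: (dd_cases s e c y0) => [[_ D]|[D _]|[D _]] //; try by rewrite D.
move=> _.
rewrite /RowOK /hu /hh /=; split => //; lia.
Qed.

Lemma trow_ok1 k s e c y0 : (y0 < k)%N -> dd s e c y0 = 1 -> RowOK k s e c (trow s true) y0.
Proof.
move=> yk; case: (dd_cases s e c y0) => [[D _]|[_ [D1 D2]]|[D _]] //; try by rewrite D.
rewrite /RowOK /hu /hh /=; split => //; try lia.
move=> _; split => //; rewrite /color /= -D2.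
by apply/idP/idP; lia.
Qed.

Lemma GoodFrom_k k s e c p : GoodFrom k s e c p k.
Proof. by split; move=> *; lia. Qed.

Lemma sign_pos s e c y0 N :
  (forall n, (y0 <= n < N)%N -> sumd s e c y0 n.+1 != 0) ->
  forall n, (y0 <= n < N)%N ->
    (dd s e c y0 = 1 -> 0 < sumd s e c y0 n.+1) /\ (dd s e c y0 = -1 -> sumd s e c y0 n.+1 < 0).
Proof.
move=> Fnz; elim=> [|n IH] /andP [h1 h2].
  move: h1; rewrite leqn0 => /eqP e0; subst y0.
  by rewrite sumdS // sumd_nil add0r; split => ->.
have [e0|ne] := eqVneq y0 n.+1.
  by subst y0; rewrite sumdS // sumd_nil add0r; split => ->.
have h1' : (y0 <= n)%N by lia.
have [I1 I2] := IH (introT andP (conj h1' (ltnW h2))).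
have := Fnz n.+1; rewrite h1 h2 => /(_ isT).
rewrite sumdS; last by lia.
case: (dd_val s e c n.+1) => [->|[->|->]] nz; split => H;
  [have := I1 H|have := I2 H|have := I1 H|have := I2 H|have := I1 H|have := I2 H]; lia.
Qed.

Lemma from_rows k s e c : forall t y0, (k - y0 <= t)%N -> (y0 <= k)%N ->
  0 <= sumd s e c y0 k -> exists p, GoodFrom k s e c p y0.
Proof.
elim=> [|t IH] y0 ht hk hs.
  have -> : y0 = k by lia.
  by exists (trow s false); apply: GoodFrom_k.
have [ek|ne] := eqVneq y0 k.
  by subst y0; exists (trow s false); apply: GoodFrom_k.
have yk : (y0 < k)%N by lia.
have spl : sumd s e c y0 k = dd s e c y0 + sumd s e c y0.+1 k.
  rewrite (sumd_split (ltnW (ltnSn y0)) yk) sumdS // sumd_nil add0r //.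
have ht' : (k - y0.+1 <= t)%N by lia.
case: (dd_val s e c y0) => [D0|Dpm].
  have hs' : 0 <= sumd s e c y0.+1 k by lia.
  have [p2 G2] := IH y0.+1 ht' yk hs'.
  exists (glue y0 (trow s false) p2); apply: glue_ok => //.
  + move=> n hn; have -> : n = y0 by lia.
    exact: trow_ok0.
  all: try by move=> n; lia.
have dnz : dd s e c y0 != 0 by case: Dpm => ->.
case: (pickP (fun n : 'I_k => (y0 < n)%N && (sumd s e c y0 n.+1 == 0))) => [i Hi|H0].
  have exP : exists n, (y0 < n < k)%N && (sumd s e c y0 n.+1 == 0).
    by exists i; move: Hi => /andP [-> ->]; rewrite ltn_ord.
  case: (ex_minnP exP) => y1 /andP [/andP [a b] /eqP c0] miny1.
  have nz : forall n, (y0 <= n < y1)%N -> sumd s e c y0 n.+1 != 0.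
    move=> n /andP [n1 n2]; have [en|nen] := eqVneq n y0.
      by subst n; rewrite sumdS // sumd_nil add0r.
    apply/negP => /eqP z0.
    have := miny1 n; rewrite z0 eqxx andbT (ltn_trans n2 b) andbT.
    have -> : (y0 < n)%N by lia.
    move=> /(_ isT); lia.
  have [p1 [R1 I1 m1 n1]] := episode k s e c y0 y1 a b c0 nz.
  have ht1 : (k - y1.+1 <= t)%N by lia.
  have hy : (y0 <= y1.+1)%N by lia.
  have hs1 : 0 <= sumd s e c y1.+1 k by move: hs; rewrite (sumd_split hy b) c0 add0r.
  have [p2 G2] := IH y1.+1 ht1 b hs1.
  exists (glue y1 p1 p2); apply: glue_ok => //; lia.
have Fnz : forall n, (y0 <= n < k)%N -> sumd s e c y0 n.+1 != 0.
  move=> n /andP [n1 n2]; have [en|nen] := eqVneq n y0.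
    by subst n; rewrite sumdS // sumd_nil add0r.
  have := H0 (Ordinal n2); rewrite /= => /negbT; rewrite negb_and; lia.
have km : k = k.-1.+1 by lia.
have hk1 : (y0 <= k.-1 < k)%N by lia.
have [P1 P2] := sign_pos s e c y0 k Fnz k.-1 hk1.
rewrite -km in P1 P2.
case: Dpm => D; last by have := P2 D; lia.
have hs' : 0 <= sumd s e c y0.+1 k by have := P1 D; lia.
have [p2 G2] := IH y0.+1 ht' yk hs'.
exists (glue y0 (trow s true) p2); apply: glue_ok => //.
+ move=> n hn; have -> : n = y0 by lia.
  exact: trow_ok1.
all: try by move=> n; lia.
Qed.

Local Open Scope fset_scope.

Lemma dd_neg s e c n : dd s e (~~ c) n = - dd s e c n.
Proof. by rewrite /dd; case: ifP => // _; case: (2 %| _)%Z; case: c. Qed.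

Lemma sumd_neg s e c a b : sumd s e (~~ c) a b = - sumd s e c a b.
Proof. by rewrite /sumd -sumrN; apply: eq_bigr => i _; apply: dd_neg. Qed.

Theorem lemma6 (k l : nat) (L R : {fset cell}) :
  ~~ odd l ->
  L `<=` box (-1) 0 0 k%:Z ->
  R `<=` box l%:Z (l%:Z + 1)%R 0 k%:Z ->
  (2 * k <= l)%N ->
  let P := L `|` R `|` box 0 l%:Z 0 k%:Z in
  (forall (black : bool) (D : {fset domino}),
      (ncol P (~~ black) <= ncol P black)%N ->
      max_packing P D ->
      #|` uncovered P D| = (ncol P black - ncol P (~~ black))%N) /\
  (exists D : {fset domino},
      max_packing P D /\
      (forall c, c \in box (k%:Z + 1)%R (l%:Z - k%:Z - 1)%R 0 k%:Z -> covered D c) /\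
      (forall d, d \in D ->
         (exists2 c, c \in box (k%:Z + 1)%R (l%:Z - k%:Z - 1)%R 0 k%:Z & c \in dcells d) ->
         horizontal d)).
Proof.
move=> _ hL hR hl P.
set s := sf L; set e := ef l R.
have [c hc] : exists c, 0 <= sumd s e c 0 k.
  case: (lerP 0 (sumd s e true 0 k)) => h; first by exists true.
  by exists false; rewrite (sumd_neg s e true); lia.
have [p [G1 G2 G3 G4]] := from_rows k s e c k 0 (leq_subr 0 k) (leq0n k) hc.
have G : Good k s e c p.
  split.
  - by move=> n nk; apply: G1.
  - by move=> n nk; apply: G2.
  - exact: G3.
  - by move=> n nk; apply: G4.
have [D [pk unc cov hor]] := construct k l L R c p hL hR hl G.
have [mx H] := assemble _ _ _ pk unc.
split; first exact: H.
by exists D.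
Qed.
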